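(* Let $T$ be a complete first-order theory in a countable language with an uncountable atomic model. Suppose $\delta(x)$ is a complete formula in one variable that is not pseudo-algebraic. Then for every countable atomic model $N$ and every finite tuple $\mathbf e\subseteq N$, there are $M\preceq N$ and $c\in N\setminus M$ such that $\mathbf e\subseteq M$ and $N\models\delta(c)$.
   Context: A complete formula is one isolating a complete type over $\emptyset$ realized in an atomic model. A complete formula $\phi(x,\mathbf a)$ in one variable is pseudo-algebraic if for some/any countable atomic $M$ containing $\mathbf a$ and any atomic $N\succeq M$ with $N\neq M$, $\phi(N,\mathbf a)=\phi(M,\mathbf a)$. *)

(* Defs.v *)
From mathcomp Require Import all_boot.

Set Implicit Arguments.
Unset Strict Implicit.
Unset Printing Implicit Defensive.

Record Lang := {
  Fn : Type;
  fn_ar : Fn -> nat;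
  Rl : Type;
  rl_ar : Rl -> nat }.

Definition countable (X : Type) : Prop := exists f : X -> nat, injective f.

Definition countable_lang (L : Lang) : Prop :=
  countable (Fn L) /\ countable (Rl L).

Inductive term (L : Lang) : Type :=
| Var : nat -> term L
| App : forall f : Fn L, ('I_(fn_ar f) -> term L) -> term L.

Inductive formula (L : Lang) : Type :=
| Equ : term L -> term L -> formula L
| Rel : forall r : Rl L, ('I_(rl_ar r) -> term L) -> formula L
| Neg : formula L -> formula L
| And : formula L -> formula L -> formula L
| Ex  : nat -> formula L -> formula L.   (* Ex k φ = ∃ x_k φ *)

Arguments Var {L}.

Definition Imp (L : Lang) (p q : formula L) : formula L := Neg (And p (Neg q)).

Fixpoint tfree (L : Lang) (P : nat -> Prop) (t : term L) : Prop :=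
  match t with
  | Var n => P n
  | App f a => forall i, tfree P (a i)
  end.

Fixpoint ffree (L : Lang) (P : nat -> Prop) (p : formula L) : Prop :=
  match p with
  | Equ t u => tfree P t /\ tfree P u
  | Rel r a => forall i, tfree P (a i)
  | Neg q => ffree P q
  | And q1 q2 => ffree P q1 /\ ffree P q2
  | Ex k q => ffree (fun j => j = k \/ P j) q
  end.

Definition sentence (L : Lang) (p : formula L) : Prop := ffree (fun _ => False) p.

Definition formula_in (L : Lang) (n : nat) (p : formula L) : Prop :=
  ffree (fun j => j < n) p.

Record structure (L : Lang) := {
  dom :> Type;
  dom_inh : dom;
  interp_fn : forall f : Fn L, ('I_(fn_ar f) -> dom) -> dom;
  interp_rl : forall r : Rl L, ('I_(rl_ar r) -> dom) -> Prop }.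

Fixpoint eval (L : Lang) (M : structure L) (s : nat -> M) (t : term L) : M :=
  match t with
  | Var n => s n
  | App f a => @interp_fn L M f (fun i => eval s (a i))
  end.

Definition upd (X : Type) (s : nat -> X) (k : nat) (x : X) : nat -> X :=
  fun j => if j == k then x else s j.

Fixpoint sat (L : Lang) (M : structure L) (s : nat -> M) (p : formula L) : Prop :=
  match p with
  | Equ t u => eval s t = eval s u
  | Rel r a => @interp_rl L M r (fun i => eval s (a i))
  | Neg q => ~ sat s q
  | And q1 q2 => sat s q1 /\ sat s q2
  | Ex k q => exists x : M, sat (upd s k x) q
  end.

Definition theory (L : Lang) := formula L -> Prop.

Definition is_model (L : Lang) (T : theory L) (M : structure L) : Prop :=
  forall p, T p -> forall s : nat -> M, sat s p.

Definition entails (L : Lang) (T : theory L) (p : formula L) : Prop :=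
  forall M : structure L, is_model T M -> forall s : nat -> M, sat s p.

Definition complete_theory (L : Lang) (T : theory L) : Prop :=
  (forall p, T p -> sentence p) /\
  (exists M : structure L, is_model T M) /\
  (forall p, sentence p -> entails T p \/ entails T (Neg p)).

Definition isolating (L : Lang) (T : theory L) (n : nat) (p : formula L) : Prop :=
  formula_in n p /\
  (exists (M : structure L) (s : nat -> M), is_model T M /\ sat s p) /\
  (forall q, formula_in n q -> entails T (Imp p q) \/ entails T (Imp p (Neg q))).

Definition atomic (L : Lang) (T : theory L) (M : structure L) : Prop :=
  is_model T M /\
  forall (n : nat) (s : nat -> M), exists p, isolating T n p /\ sat s p.

Definition complete_formula (L : Lang) (T : theory L) (n : nat) (p : formula L) : Prop :=
  isolating T n p /\
  exists (M : structure L) (s : nat -> M), atomic T M /\ sat s p.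

(** elementary embeddings (M ≼ N up to the identification of M with h(M)) *)
Definition elem_emb (L : Lang) (M N : structure L) (h : M -> N) : Prop :=
  injective h /\ forall (p : formula L) (s : nat -> M), sat s p <-> sat (h \o s) p.

Definition realizes1 (L : Lang) (N : structure L) (c : N) (p : formula L) : Prop :=
  sat (fun _ => c) p.

(** pseudo-algebraic, for a parameter-free complete formula in one variable,
    using the "any" reading of "some/any" *)
Definition pseudo_algebraic1 (L : Lang) (T : theory L) (d : formula L) : Prop :=
  forall (M N : structure L) (h : M -> N),
    countable M -> atomic T M -> atomic T N -> elem_emb h ->
    ~ (forall y : N, exists x : M, h x = y) ->
    forall c : N, realizes1 c d -> exists m : M, h m = c.

(* Main.v *)
Require Import Defs.
From Stdlib Require List.
From mathcomp Require Import all_boot.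
From Stdlib Require Import Classical ClassicalEpsilon FunctionalExtensionality.
From mathcomp Require Import zify.

Set Implicit Arguments.
Unset Strict Implicit.
Unset Printing Implicit Defensive.

Lemma tfree_mono (L : Lang) (P Q : nat -> Prop) (t : term L) :
  (forall j, P j -> Q j) -> tfree P t -> tfree Q t.
Proof. move=> PQ; elim: t => [n|f a IH] /=; [exact: PQ | by move=> H i; apply: IH]. Qed.

Lemma ffree_mono (L : Lang) (q : formula L) : forall (P Q : nat -> Prop),
  (forall j, P j -> Q j) -> ffree P q -> ffree Q q.
Proof.
elim: q => [t u|r a|q IH|q1 IH1 q2 IH2|k q IH] P Q PQ /=.
- by case=> H1 H2; split; [apply: tfree_mono H1|apply: tfree_mono H2].
- by move=> H i; apply: tfree_mono (H i).
- exact: IH.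
- by case=> H1 H2; split; [apply: IH1 PQ H1|apply: IH2 PQ H2].
- apply: IH => j [->|Pj]; [by left|by right; apply: PQ].
Qed.

Lemma eval_ext (L : Lang) (M : structure L) (P : nat -> Prop) (s s' : nat -> M) (t : term L) :
  (forall j, P j -> s j = s' j) -> tfree P t -> eval s t = eval s' t.
Proof.
move=> E; elim: t => [n|f a IH] /=; first exact: E.
move=> H; f_equal; apply: functional_extensionality => i; exact: IH.
Qed.

Lemma sat_ext (L : Lang) (M : structure L) (q : formula L) : forall (P : nat -> Prop) (s s' : nat -> M),
  (forall j, P j -> s j = s' j) -> ffree P q -> (sat s q <-> sat s' q).
Proof.
elim: q => [t u|r a|q IH|q1 IH1 q2 IH2|k q IH] P s s' E /=.
- by case=> H1 H2; rewrite (eval_ext E H1) (eval_ext E H2).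
- move=> H; have ->: (fun i => eval s (a i)) = (fun i => eval s' (a i)); last by [].
  by apply: functional_extensionality => i; apply: eval_ext E (H i).
- by move=> H; have := IH P s s' E H; tauto.
- by case=> H1 H2; have := IH1 P s s' E H1; have := IH2 P s s' E H2; tauto.
- move=> H.
  have Ag : forall x j, j = k \/ P j -> upd s k x j = upd s' k x j.
    move=> x j [->|Pj]; rewrite /upd ?eqxx //; case: eqP => // _; exact: E.
  split=> -[x Hx]; exists x; [exact: (proj1 (IH _ _ _ (Ag x) H) Hx)
                              | exact: (proj2 (IH _ _ _ (Ag x) H) Hx)].
Qed.

Fixpoint tren (L : Lang) (sg : nat -> nat) (t : term L) : term L :=
  match t with
  | Var n => Var (sg n)
  | App f a => @App L f (fun i => tren sg (a i))
  end.

Lemma eval_tren L (M : structure L) sg (s : nat -> M) t :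
  eval s (tren sg t) = eval (s \o sg) t.
Proof.
elim: t => [n|f a IH] //=; f_equal.
apply: functional_extensionality => i; exact: IH.
Qed.

Lemma tfree_tren L (P Q : nat -> Prop) sg (t : term L) :
  (forall i, P i -> Q (sg i)) -> tfree P t -> tfree Q (tren sg t).
Proof. move=> H; elim: t => [n|f a IH] /=; [exact: H | move=> Ha i; exact: IH]. Qed.

Fixpoint supb (sg : nat -> nat) (b : nat) : nat :=
  if b is b'.+1 then maxn (sg b').+1 (supb sg b') else 0.

Lemma supbP sg b i : i < b -> sg i < supb sg b.
Proof.
elim: b => [//|b IH]; rewrite ltnS leq_eqVlt => /orP[/eqP->|/IH] /=; lia.
Qed.

Lemma ren_ex L (q : formula L) : forall (P : nat -> Prop) b sg (Q : nat -> Prop),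
  (forall i, P i -> i < b) -> ffree P q -> (forall i, P i -> Q (sg i)) ->
  exists q', ffree Q q' /\ forall (M : structure L) (s : nat -> M), sat s q' <-> sat (s \o sg) q.
Proof.
elim: q => [t u|r a|q IH|q1 IH1 q2 IH2|k q IH] P b sg Q Pb /= Hf PQ.
- exists (Equ (tren sg t) (tren sg u)); split => /=.
    by case: Hf => H1 H2; split; apply: tfree_tren PQ _.
  by move=> M s; rewrite !eval_tren.
- exists (Rel (fun i => tren sg (a i))); split => /=.
    by move=> i; apply: tfree_tren PQ _.
  move=> M s; have -> : (fun i => eval s (tren sg (a i))) = (fun i => eval (s \o sg) (a i)).
    by apply: functional_extensionality => i; rewrite eval_tren.
  by [].
- have [q' [H1 H2]] := IH P b sg Q Pb Hf PQ.
  exists (Neg q'); split => // M s /=; have := H2 M s; tauto.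
- case: Hf => Hf1 Hf2.
  have [q1' [H1 H1']] := IH1 P b sg Q Pb Hf1 PQ.
  have [q2' [H2 H2']] := IH2 P b sg Q Pb Hf2 PQ.
  exists (And q1' q2'); split => // M s /=; have := H1' M s; have := H2' M s; tauto.
- pose k' := supb sg b.
  have S1 : forall i, i = k \/ P i -> i < maxn k.+1 b.
    move=> i [->|/Pb]; lia.
  have S2 : forall i, i = k \/ P i -> (fun j => j = k' \/ Q j) (upd sg k k' i).
    move=> i [Ei|Pi]; first by subst i; rewrite /= /upd eqxx; left.
    rewrite /= /upd; case: eqP => [_|_]; [by left|right; exact: PQ].
  have [q' [H1 H2]] := IH (fun j => j = k \/ P j) (maxn k.+1 b) (upd sg k k')
                        (fun j => j = k' \/ Q j) S1 Hf S2.
  exists (Ex k' q'); split => // M s /=.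
  have Ag : forall x j, j = k \/ P j -> (upd s k' x \o upd sg k k') j = upd (s \o sg) k x j.
    move=> x j [->|Pj]; rewrite /upd /=; first by rewrite eqxx /= eqxx.
    have [E|jk] := eqVneq j k; first by subst j; rewrite /= ?eqxx.
    have lt := supbP sg (Pb _ Pj); rewrite -/k' in lt.
    by rewrite /= (ltn_eqF lt).
  split=> -[x Hx]; exists x.
  + exact: (proj1 (sat_ext (Ag x) Hf) (proj1 (H2 M _) Hx)).
  + exact: (proj2 (H2 M _) (proj2 (sat_ext (Ag x) Hf) Hx)).
Qed.

Lemma tbound L (t : term L) : exists b, tfree (fun j => j < b) t.
Proof.
elim: t => [n|f a IH]; first by exists n.+1 => /=.
have [g Hg] := fin_all_exists IH.
exists (\max_(i < fn_ar f) g i)%N => /= i; apply: tfree_mono (Hg i) => j Hj.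
apply: (leq_trans Hj); exact: leq_bigmax.
Qed.

Lemma fbound L (q : formula L) : exists b, ffree (fun j => j < b) q.
Proof.
elim: q => [t u|r a|q IH|q1 IH1 q2 IH2|k q IH].
- have [b1 H1] := tbound t; have [b2 H2] := tbound u; exists (maxn b1 b2) => /=.
  by split; [apply: tfree_mono H1|apply: tfree_mono H2] => j; lia.
- have [g Hg] := fin_all_exists (fun i => tbound (a i)).
  exists (\max_(i < rl_ar r) g i)%N => /= i; apply: tfree_mono (Hg i) => j Hj.
  apply: (leq_trans Hj); exact: leq_bigmax.
- exact: IH.
- have [b1 H1] := IH1; have [b2 H2] := IH2; exists (maxn b1 b2) => /=.
  by split; [apply: ffree_mono H1|apply: ffree_mono H2] => j; lia.
- have [b H] := IH; exists b => /=; apply: ffree_mono H => j Hj; by right.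
Qed.

Definition pe (L : Lang) (M1 M2 : structure L) n (s : nat -> M1) (t : nat -> M2) :=
  forall q, formula_in n q -> (sat s q <-> sat t q).

Lemma imp_sat L (M : structure L) (s : nat -> M) (p q : formula L) : sat s (Imp p q) -> sat s p -> sat s q.
Proof. rewrite /Imp /= => H Hp; apply: NNPP => Hq; exact: H. Qed.

Lemma forth L (T : theory L) (M1 M2 : structure L) n s t (x : M1) :
  atomic T M1 -> is_model T M2 -> pe n s t ->
  exists y : M2, pe n.+1 (upd s n x) (upd t n y).
Proof.
move=> [mod1 at1] mod2 H.
have [p [[pin [_ piso]] sp]] := at1 n.+1 (upd s n x).
have fin : formula_in n (Ex n p).
  rewrite /formula_in /=; apply: ffree_mono pin => j /=; lia.
have : sat s (Ex n p) by exists x.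
move=> /(proj1 (H _ fin)) [y Hy]; exists y => q qin.
case: (piso q qin) => E.
- have h1 := imp_sat (E M1 mod1 (upd s n x)) sp.
  have h2 := imp_sat (E M2 mod2 (upd t n y)) Hy.
  by split.
- have h1 := imp_sat (E M1 mod1 (upd s n x)) sp.
  have h2 := imp_sat (E M2 mod2 (upd t n y)) Hy.
  simpl in h1, h2; tauto.
Qed.

Lemma pe0 L (T : theory L) (M1 M2 : structure L) (s : nat -> M1) (t : nat -> M2) :
  complete_theory T -> is_model T M1 -> is_model T M2 -> @pe L M1 M2 0 s t.
Proof.
move=> [_ [_ cT]] m1 m2 q qin.
have sq : sentence q by apply: ffree_mono qin.
case: (cT q sq) => E; first by split=> _; [exact: E M2 m2 t | exact: E M1 m1 s].
have := E M1 m1 s; have := E M2 m2 t => /=; tauto.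
Qed.

Lemma pe_sym L (M1 M2 : structure L) n s t : @pe L M1 M2 n s t -> pe n t s.
Proof. move=> H q qin; have := H q qin; tauto. Qed.

Lemma upd_same X (s : nat -> X) k : upd s k (s k) = s.
Proof. apply: functional_extensionality => j; rewrite /upd; by case: eqP => [->|]. Qed.

Lemma enum_ex (X : Type) (x0 : X) : countable X -> exists g : nat -> X, forall x, exists k, g k = x.
Proof.
move=> [f finj].
have H : forall k, exists y : X, (exists x, f x = k) -> f y = k.
  move=> k; case: (classic (exists x, f x = k)) => [[x Hx]|nH].
  - by exists x.
  - by exists x0.
exists (fun k => proj1_sig (constructive_indefinite_description _ (H k))) => x.
exists (f x); apply: finj.
exact: (proj2_sig (constructive_indefinite_description _ (H (f x)))) (ex_intro _ x erefl).
Qed.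

Lemma upd_eq X (s : nat -> X) k x : upd s k x k = x.
Proof. by rewrite /upd eqxx. Qed.

Lemma upd_neq X (s : nat -> X) k x j : j != k -> upd s k x j = s j.
Proof. by rewrite /upd => /negbTE ->. Qed.

Theorem lemma3p3p2 (L : Lang) (T : theory L) :
  countable_lang L ->
  complete_theory T ->
  (exists M : structure L, atomic T M /\ ~ countable M) ->
  forall d : formula L,
    complete_formula T 1 d ->
    ~ pseudo_algebraic1 T d ->
    forall N : structure L, countable N -> atomic T N ->
    forall e : list N,
      exists (M : structure L) (h : M -> N),
        elem_emb h /\
        (forall x, List.In x e -> exists m : M, h m = x) /\
        exists c : N, (forall m : M, h m <> c) /\ realizes1 c d.
Proof.
move=> cL cT _ d _ npa N cN aN e.
have [M [N' [h [cM [aM [aN' [eh [c [rc nc]]]]]]]]] :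
  exists (M N' : structure L) (h : M -> N'), countable M /\ atomic T M /\ atomic T N' /\
    elem_emb h /\ exists c : N', realizes1 c d /\ forall m, h m <> c.
  apply: NNPP => H; apply: npa => M N' h cM aM aN' eh ns c rc.
  apply: NNPP => H2; apply: H; exists M, N', h; do 4 (split => //).
  exists c; split => // m E; apply: H2; by exists m.
have mN := aN.1; have mN' := aN'.1; have mM := aM.1.
pose n := List.length e.
pose se : nat -> N := fun i => List.nth i e (dom_inh N).
have Hall : forall k, exists te : nat -> M, pe k se te.
  elim=> [|k [t Ht]]; first by exists (fun _ => dom_inh M); exact: pe0 cT mN mM.
  have [y Hy] := forth (se k) aN mM Ht; exists (upd t k y).
  by rewrite upd_same in Hy.
have [te Hte] := Hall n.
have HteN' : pe n se (h \o te).
  move=> q qin; have := Hte q qin; have := eh.2 q te; tauto.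
have [eN eNs] := enum_ex (dom_inh N) cN.
have [eM eMs] := enum_ex (dom_inh M) cM.
pose eB k := if k is k'.+1 then h (eM k') else c.
have HF : forall l (s : nat -> N) (t : nat -> N') (x : N),
    exists y : N', pe l s t -> pe l.+1 (upd s l x) (upd t l y).
  move=> l s t x; case: (classic (pe l s t)) => [H|nH]; last by exists (dom_inh N').
  have [y Hy] := forth x aN mN' H; by exists y.
have HG : forall l (s : nat -> N) (t : nat -> N') (y : N'),
    exists x : N, pe l s t -> pe l.+1 (upd s l x) (upd t l y).
  move=> l s t y; case: (classic (pe l s t)) => [H|nH]; last by exists (dom_inh N).
  have [x Hx] := forth y aN' mN (pe_sym H); exists x => _; exact: pe_sym.
pose Fy l s t x := proj1_sig (constructive_indefinite_description _ (HF l s t x)).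
pose Gx l s t y := proj1_sig (constructive_indefinite_description _ (HG l s t y)).
have FyP : forall l s t x, pe l s t -> pe l.+1 (upd s l x) (upd t l (Fy l s t x)).
  move=> l s t x; exact: (proj2_sig (constructive_indefinite_description _ (HF l s t x))).
have GxP : forall l s t y, pe l s t -> pe l.+1 (upd s l (Gx l s t y)) (upd t l y).
  move=> l s t y; exact: (proj2_sig (constructive_indefinite_description _ (HG l s t y))).
pose step k (st : (nat -> N) * (nat -> N')) :=
  let l := n + 2 * k in
  let s1 := upd st.1 l (eN k) in
  let t1 := upd st.2 l (Fy l st.1 st.2 (eN k)) in
  (upd s1 l.+1 (Gx l.+1 s1 t1 (eB k)), upd t1 l.+1 (eB k)).
pose st k := iteri k step (se, h \o te).
have stS : forall k, st k.+1 = step k (st k) by [].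
have Inv : forall k, pe (n + 2 * k) (st k).1 (st k).2.
  elim=> [|k IH]; first by rewrite muln0 addn0.
  rewrite stS /step /=.
  have -> : n + 2 * k.+1 = (n + 2 * k).+2 by lia.
  apply: GxP; apply: FyP; exact: IH.
have stab1 : forall k i, i < n + 2 * k ->
    (st k.+1).1 i = (st k).1 i /\ (st k.+1).2 i = (st k).2 i.
  move=> k i lt; rewrite stS /step /=.
  have ne1 : i != (n + 2 * k).+1 by apply/eqP; lia.
  have ne0 : i != n + 2 * k by apply/eqP; lia.
  by rewrite !upd_neq.
have stab : forall dd K i, i < n + 2 * K ->
    (st (K + dd)).1 i = (st K).1 i /\ (st (K + dd)).2 i = (st K).2 i.
  move=> dd K i lt; elim: dd => [|dd [IH1 IH2]]; first by rewrite addn0.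
  rewrite addnS; have [E1 E2] := stab1 (K + dd) i ltac:(lia).
  by rewrite E1 E2 IH1 IH2.
pose A i := (st i.+1).1 i.
pose B i := (st i.+1).2 i.
have AB : forall k i, i < n + 2 * k -> A i = (st k).1 i /\ B i = (st k).2 i.
  move=> k i lt; case: (leqP k i.+1) => hk.
  - have := stab (i.+1 - k) k i lt; rewrite subnKC //.
  - have := stab (k - i.+1) i.+1 i ltac:(lia); rewrite subnKC; last by lia.
    by case=> -> ->.
have peAB : forall m, pe m A B.
  move=> m q qin.
  have qin' : formula_in (n + 2 * m) q by apply: ffree_mono qin => j /=; lia.
  have E1 := @sat_ext L N q _ A (st m).1 (fun j lt => (AB m j lt).1) qin'.
  have E2 := @sat_ext L N' q _ B (st m).2 (fun j lt => (AB m j lt).2) qin'.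
  have := Inv m q qin'; tauto.
have Elem : forall q (sg : nat -> nat), sat (A \o sg) q <-> sat (B \o sg) q.
  move=> q sg; have [b Hb] := fbound q.
  have [q' [Hq' Hs]] := @ren_ex L q (fun j => j < b) b sg (fun j => j < supb sg b)
     (fun i Hi => Hi) Hb (fun i Hi => supbP sg Hi).
  have := Hs N A; have := Hs N' B; have := peAB (supb sg b) q' Hq'; tauto.
have EqT : forall i j, A i = A j <-> B i = B j.
  move=> i j; exact: (Elem (Equ (@Var L 0) (@Var L 1)) (fun k => if k == 0 then i else j)).
have Hcov : forall m : M, exists i, B i = h m.
  move=> m; have [k Hk] := eMs m; exists (n + 2 * k.+1).+1.
  have [_ ->] := AB k.+2 (n + 2 * k.+1).+1 ltac:(lia).
  by rewrite stS /step /= upd_eq /= Hk.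
have Bc : B n.+1 = c.
  have [_ ->] := AB 1 n.+1 ltac:(lia).
  by rewrite stS /step /= muln0 addn0 upd_eq.
pose iota m := proj1_sig (constructive_indefinite_description _ (Hcov m)).
have Hiota : forall m, B (iota m) = h m.
  move=> m; exact: (proj2_sig (constructive_indefinite_description _ (Hcov m))).
exists M, (fun m => A (iota m)); split; [split|split].
- move=> m1 m2 E; apply: eh.1; rewrite -!Hiota; exact: (proj1 (EqT _ _) E).
- move=> p s.
  have E1 : h \o s = B \o (iota \o s).
    by apply: functional_extensionality => i; rewrite /= Hiota.
  have := eh.2 p s; rewrite E1; have := Elem p (iota \o s); simpl; tauto.
- move=> x Hin; have [i [lt Ei]] := List.In_nth e x (dom_inh N) Hin.
  move/ltP: lt => lt.
  exists (te i).
  have [EA EB] := AB 0 i ltac:(lia).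
  rewrite -Ei; have -> : List.nth i e (dom_inh N) = A i by rewrite EA.
  apply: (proj2 (EqT _ _)); by rewrite Hiota EB.
- exists (A n.+1); split.
  + move=> m E; apply: (nc m); rewrite -Hiota -Bc; exact: (proj1 (EqT _ _) E).
  + have H := proj2 (Elem d (fun _ => n.+1)).
    have e1 : (B \o (fun _ : nat => n.+1)) = (fun _ => c).
      by apply: functional_extensionality => ?; exact: Bc.
    rewrite e1 in H; exact: H rc.
Qed.
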